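(* Let $f\in\mathbf{SB}_n$ be nonconstant. If $\deg(f)$ is not a power of $2$, then $\mathcal{AI}(f)<2^{\lfloor\log_2\deg(f)\rfloor}$. Consequently, every nonconstant $f\in\mathbf{SB}_n$ satisfies $\mathcal{AI}(f)\le 2^{\lfloor\log_2\deg(f)\rfloor}$.
   Context: $\mathbf{SB}_n$ is the set of symmetric Boolean functions on $n$ variables; $\deg$ is the algebraic degree. The algebraic immunity is $\mathcal{AI}(f)=\min\{\deg(g): g\neq0,\ gf=0 \text{ or } g(f+1)=0\}$. *)

(* Defs.v *)
From mathcomp Require Import all_boot all_fingroup.
Set Implicit Arguments. Unset Strict Implicit. Unset Printing Implicit Defensive.

(* Boolean functions on n variables: maps from F_2^n (modelled as 'I_n -> bool) to F_2. *)
Definition bvec (n : nat) := {ffun 'I_n -> bool}.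
Definition boolfun (n : nat) := {ffun bvec n -> bool}.

Definition supp n (x : bvec n) : {set 'I_n} := [set i | x i].

(* ANF coefficient of the monomial prod_{i in S} x_i (Moebius transform over F_2):
   a_S = XOR_{x : supp x \subset S} f x. *)
Definition anf_coef n (f : boolfun n) (S : {set 'I_n}) : bool :=
  \big[addb/false]_(x : bvec n | supp x \subset S) f x.

(* algebraic degree: max size of a monomial with nonzero ANF coefficient (0 for f = 0) *)
Definition deg n (f : boolfun n) : nat :=
  \max_(S : {set 'I_n} | anf_coef f S) #|S|.

Definition sym_boolfun n (f : boolfun n) : Prop :=
  forall (s : {perm 'I_n}) (x : bvec n), f [ffun i => x (s i)] = f x.

Definition bconst n (b : bool) : boolfun n := [ffun _ => b].

(* product g*f = 0 pointwise, and f+1 = complement *)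
Definition annihilates n (g f : boolfun n) : bool := [forall x, ~~ (g x && f x)].
Definition bcompl n (f : boolfun n) : boolfun n := [ffun x => ~~ f x].

(* algebraic immunity: min deg of nonzero g with g f = 0 or g (f+1) = 0.
   The set is always nonempty (f or f+1 is nonzero and annihilates the other),
   and every degree is <= n, so the default value n.+1 is never attained. *)
Definition AI n (f : boolfun n) : nat :=
  \big[minn/n.+1]_(g : boolfun n | (g != bconst n false) &&
                     (annihilates g f || annihilates g (bcompl f))) deg g.

Definition is_pow2 (d : nat) : Prop := exists k, d = 2 ^ k.

(* Main.v *)
Require Import Defs.
From mathcomp Require Import all_boot all_fingroup.
Set Implicit Arguments. Unset Strict Implicit. Unset Printing Implicit Defensive.

Definition xw n w : bvec n := [ffun i : 'I_n => i < w].

Lemma card_lt n w : w <= n -> #|[set i : 'I_n | i < w]| = w.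
Proof.
move=> wn.
rewrite cardsE cardE /enum_mem -enumT size_filter -(count_map val (fun i => i < w)).
rewrite val_enum_ord -size_filter.
have := filter_iota_ltn 0 wn. rewrite add0n => ->. by rewrite size_iota.
Qed.

Lemma supp_xw n w : supp (xw n w) = [set i : 'I_n | i < w].
Proof. by apply/setP=> i; rewrite !inE ffunE. Qed.

Lemma wt_xw n w : w <= n -> #|supp (xw n w)| = w.
Proof. by move=> wn; rewrite supp_xw card_lt. Qed.

Lemma wt_le n (x : bvec n) : #|supp x| <= n.
Proof. by apply: leq_trans (max_card _) _; rewrite card_ord. Qed.

Lemma count_bool (a : pred bool) u :
  count a u = a true * count id u + a false * count negb u.
Proof.
elim: u => [|b u IH]; first by rewrite !muln0.
rewrite /= IH; case: b; case: (a true); case: (a false);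
  rewrite /= ?mul1n ?mul0n ?add0n ?addn0 ?addnS ?addSn //.
Qed.

Lemma perm_eq_bool (s t : seq bool) :
  size s = size t -> count id s = count id t -> perm_eq s t.
Proof.
move=> Hs Hc; apply/seq.permP => a; rewrite (count_bool a s) (count_bool a t).
have Hn u : count negb u = size u - count id u.
  by rewrite -(count_predC id u) addKn.
by rewrite (Hn s) (Hn t) Hs Hc.
Qed.
Lemma card_count n (P : pred 'I_n) : #|[set i | P i]| = count P (enum 'I_n).
Proof.
rewrite cardsE cardE {1}/enum_mem size_filter enumT.
by [].
Qed.
Lemma count_supp n (x : bvec n) : count id [seq x i | i <- enum 'I_n] = #|supp x|.
Proof. by rewrite count_map card_count. Qed.
Lemma sym_wt n (f : boolfun n) x : sym_boolfun f -> f x = f (xw n #|supp x|).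
Proof.
move=> Hf; set w := #|supp x|.
have Hw : w <= n by apply: wt_le.
pose t := [tuple x i | i < n].
pose s := [tuple (i < w) | i < n].
have : perm_eq s t.
  apply: perm_eq_bool; first by rewrite !size_tuple.
  rewrite [in RHS]/= count_supp -/w.
  have := count_supp (xw n w); rewrite wt_xw // => <-.
  by congr count; apply: eq_map => i; rewrite ffunE.
case/tuple_permP => p E.
have E' : s = [tuple tnth t (p i) | i < n] by apply: val_inj.
rewrite -(Hf p x); apply: congr1; apply/ffunP => i.
have := congr1 (fun u => tnth u i) E'; rewrite /= !tnth_mktuple !ffunE => ->.
by [].
Qed.
Definition D (H : nat -> bool) : nat -> bool := fun j => H j (+) H j.+1.

Definition flip n (a : 'I_n) (x : bvec n) : bvec n :=
  [ffun i => if i == a then ~~ x i else x i].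

Lemma flipK n (a : 'I_n) : involutive (flip a).
Proof. by move=> x; apply/ffunP => i; rewrite !ffunE; case: eqP => // _; rewrite negbK. Qed.

Lemma flip_sub n (a : 'I_n) (S : {set 'I_n}) (x : bvec n) : a \in S ->
  (supp (flip a x) \subset S) = (supp x \subset S).
Proof.
move=> aS.
have key y : a \in S -> (forall i, i \in supp (flip a y) -> i \in S) ->
   supp y \subset S.
  move=> _ h; apply/subsetP => i; rewrite inE => yi.
  case: (eqVneq i a) => [->//|ne]; apply: h; by rewrite inE ffunE (negbTE ne).
apply/idP/idP => h.
  by apply: (key _ aS) => i; apply: (subsetP h).
apply: (key _ aS) => i; rewrite flipK; exact: (subsetP h).
Qed.

Lemma supp_flip n (a : 'I_n) (x : bvec n) : ~~ x a -> supp (flip a x) = a |: supp x.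
Proof.
move=> xa; apply/setP => i; rewrite !inE ffunE.
by case: (eqVneq i a) => [->|]; rewrite ?xa.
Qed.

Lemma anf_wt n (H : nat -> bool) (S : {set 'I_n}) :
  \big[addb/false]_(x : bvec n | supp x \subset S) H #|supp x| = iter #|S| D H 0.
Proof.
move Em: #|S| => m; elim: m S H Em => [|m IH] S H Em.
  move/eqP: Em; rewrite cards_eq0 => /eqP ->.
  rewrite (big_pred1 [ffun _ => false]) /=.
    suff -> : supp [ffun _ : 'I_n => false] = set0 by rewrite cards0.
    by apply/setP => i; rewrite !inE ffunE.
  move=> x /=; rewrite subset0; apply/eqP/eqP => [h|->].
    apply/ffunP => i; rewrite ffunE; apply/negbTE.
    apply/negP => xi; have : i \in supp x by rewrite inE.
    by rewrite h inE.
  by apply/setP => i; rewrite !inE ffunE.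
have : 0 < #|S| by rewrite Em.
rewrite card_gt0 => /set0Pn [a aS].
have Em' : #|S :\ a| = m by move: Em; rewrite (cardsD1 a S) aS add1n => -[].
rewrite iterSr -(IH (S :\ a) (D H) Em') (bigID (fun x : bvec n => x a)) /=.
rewrite (reindex_inj (inv_inj (flipK a))) /=.
have Ec (x : bvec n) : (supp x \subset S :\ a) = (supp x \subset S) && ~~ x a.
  by rewrite subsetD1 inE.
rewrite [X in _ (+) X](eq_bigl (fun x : bvec n => supp x \subset S :\ a)); last first.
  by move=> x; rewrite Ec.
rewrite [X in X (+) _](eq_bigl (fun x : bvec n => supp x \subset S :\ a)); last first.
  by move=> x; rewrite Ec flip_sub // ffunE eqxx.
rewrite -big_split /=; apply: eq_bigr => x.
rewrite Ec => /andP [_ xa].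
by rewrite supp_flip // cardsU1 inE xa add1n /D addbC.
Qed.
From Stdlib Require Import FunctionalExtensionality.

Lemma iterS_D t G j : iter t.+1 D G j = iter t D G j (+) iter t D G j.+1.
Proof. by []. Qed.

Lemma iterD_pow m H j : iter (2 ^ m) D H j = H j (+) H (j + 2 ^ m).
Proof.
elim: m H j => [|m IH] H j; first by rewrite expn0 addn1.
rewrite expnS mul2n -addnn iterD IH (IH H) (IH H) addnA.
by rewrite addbA addbK.
Qed.

Lemma iter_false t j : iter t D (fun _ => false) j = false.
Proof. by elim: t j => [|t IH] j //; rewrite iterS_D !IH. Qed.

Lemma iter_const0 G (c : bool) N : (forall i, i <= N -> G i = c) ->
  forall t j, 0 < t -> t + j <= N -> iter t D G j = false.
Proof.
move=> hG; elim=> [//|t IH] j _ h.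
case: t IH h => [|t] IH h.
  rewrite iterS_D /= !hG ?addbb //; apply: ltnW; by rewrite -add1n.
rewrite iterS_D !IH //; first by rewrite addnS -addSn.
by apply: leq_trans h; rewrite ltnW.
Qed.

Lemma newton G N : (forall t, t <= N -> iter t D G 0 = false) ->
  forall j, j <= N -> G j = false.
Proof.
move=> h.
have key : forall j t, t + j <= N -> iter t D G j = false.
  elim=> [|j IH] t; first by rewrite addn0; apply: h.
  move=> htj.
  have E := iterS_D t G j.
  have -> : iter t D G j.+1 = iter t.+1 D G j (+) iter t D G j.
    by rewrite E; case: (iter t D G j); case: (iter t D G j.+1).
  by rewrite !IH // ?addSn -?addnS // (leq_trans _ htj) // leq_add2l.
by move=> j hj; apply: (key j 0).
Qed.

Lemma iterD_neg t F : iter t.+1 D (fun w => ~~ F w) = iter t.+1 D F.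
Proof.
rewrite !iterSr; congr (iter t D).
by apply: functional_extensionality => j; rewrite /D addbN addNb negbK.
Qed.

Lemma bigmin_le (I : eqType) (r : seq I) (P : pred I) (F : I -> nat) m i0 :
  i0 \in r -> P i0 -> \big[minn/m]_(i <- r | P i) F i <= F i0.
Proof.
elim: r => //= i r IH; rewrite inE big_cons; case/orP => [/eqP <- Pi|ir Pi].
  by rewrite Pi geq_minl.
case: (P i); last exact: IH.
exact: leq_trans (geq_minr _ _) (IH ir Pi).
Qed.

Lemma AI_le n (f g : boolfun n) : g != bconst n false ->
  annihilates g f || annihilates g (bcompl f) -> AI f <= deg g.
Proof.
move=> gnz gann; rewrite /AI; apply: bigmin_le; first exact: mem_index_enum.
by rewrite gnz gann.
Qed.

Lemma deg_le n (h : boolfun n) m :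
  (forall S : {set 'I_n}, m < #|S| -> anf_coef h S = false) -> deg h <= m.
Proof.
move=> H; apply/bigmax_leqP => S hS; rewrite leqNgt; apply/negP => /H.
by rewrite hS.
Qed.

Lemma deg_ge n (h : boolfun n) (S : {set 'I_n}) : anf_coef h S -> #|S| <= deg h.
Proof. by move=> hS; apply: leq_bigmax_cond. Qed.

Lemma anf_coef_wt n (h : boolfun n) H : (forall x, h x = H #|supp x|) ->
  forall S : {set 'I_n}, anf_coef h S = iter #|S| D H 0.
Proof.
move=> hH S; rewrite /anf_coef -anf_wt; apply: eq_bigr => x _; exact: hH.
Qed.
From Stdlib Require Import Lia.

Theorem proposition1 (n : nat) (f : boolfun n) :
  sym_boolfun f ->
  f <> bconst n false -> f <> bconst n true ->
  (~ is_pow2 (deg f) -> AI f < 2 ^ trunc_log 2 (deg f)) /\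
  AI f <= 2 ^ trunc_log 2 (deg f).
Proof.
move=> Hsym Hf0 Hf1.
have [F hF] : exists F : nat -> bool, forall x, f x = F #|supp x|.
  by exists (fun w => f (xw n w)) => x; exact: sym_wt.
pose c s := iter s D F 0.
have hc : forall S : {set 'I_n}, anf_coef f S = c #|S| := anf_coef_wt hF.
set d := deg f.
have dn : d <= n.
  apply/bigmax_leqP => S _; by apply: leq_trans (max_card _) _; rewrite card_ord.
have cz : forall s, s <= n -> d < s -> c s = false.
  move=> s sn ds; apply/negP => cs.
  have := @deg_ge n f [set i : 'I_n | i < s].
  rewrite hc card_lt // => /(_ cs); by rewrite leqNgt ds.
have d0 : 0 < d.
  rewrite lt0n; apply/negP => /eqP d0.
  have Gz : forall j, j < n -> D F j = false.
    move=> j jn; apply: (newton (N := n.-1)); last by rewrite -ltnS prednK // (leq_ltn_trans _ jn).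
    move=> t tn; rewrite -iterSr; apply: (cz t.+1); last by rewrite d0.
    by rewrite -(prednK (leq_ltn_trans (leq0n j) jn)) ltnS.
  have Fc : forall j, j <= n -> F j = F 0.
    elim=> [//|j IH] jn; rewrite -(IH (ltnW jn)).
    by move: (Gz j jn); rewrite /D; case: (F j); case: (F j.+1).
  have fc : f = bconst n (F 0).
    by apply/ffunP => x; rewrite hF Fc ?wt_le // ffunE.
  by move: fc; case: (F 0).
set k := trunc_log 2 d; set M := 2 ^ k.
have Md : M <= d := trunc_logP (ltnSn 1) d0.
have dP : d < 2 ^ k.+1 := trunc_log_ltn d (ltnSn 1).
have M0 : 0 < M := expn_gt0 2 k.
have P2 : 2 ^ k.+1 = M + M by rewrite expnS mul2n addnn.
have per : forall j, j + (M + M) <= n -> F (j + (M + M)) = F j.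
  move=> j jn.
  have Pn : M + M <= n by apply: leq_trans jn; rewrite leq_addl.
  have hj : j <= n - (M + M) by rewrite -(leq_add2r (M + M)) subnK.
  have G0 : iter (2 ^ k.+1) D F j = false.
    apply: (newton (N := n - 2 ^ k.+1)); last by rewrite P2.
    move=> t tn; rewrite -iterD; apply: (cz (t + 2 ^ k.+1)).
      by rewrite P2 in tn *; rewrite -(subnK Pn) leq_add2r.
    by apply: leq_trans dP _; rewrite leq_addl.
  move: G0; rewrite iterD_pow P2; by case: (F j); case: (F (j + (M + M))).
case: (boolP [exists u : 'I_M, (n < u + M) || (F u == F (u + M))]).
  move/existsP => [[u uM] /= Hu].
  have un : u <= n by apply: ltnW; apply: leq_trans uM (leq_trans Md dn).
  have claim : forall q, (q * M + u <= n -> F (q * M + u) = F u) /\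
                         (q.+1 * M + u <= n -> F (q.+1 * M + u) = F u).
    elim=> [|q [IH1 IH2]].
      split; first by rewrite mul0n add0n.
      rewrite mul1n addnC => h; move: Hu; rewrite ltnNge h /=.
      by move/eqP.
    split; first exact: IH2.
    move=> h.
    have E : q.+2 * M + u = (q * M + u) + (M + M).
      by rewrite !mulSn; set a := q * M; rewrite -!plusE; lia.
    rewrite E per -?E // IH1 //.
    by apply: leq_trans h; rewrite E leq_addr.
  have Fu : forall w, w <= n -> w %% M = u -> F w = F u.
    move=> w wn wu; rewrite (divn_eq w M) wu in wn *.
    by apply: (claim _).1.
  pose H w := w %% M == u.
  pose g := [ffun x : bvec n => H #|supp x|].
  have gdeg : deg g < M.
    rewrite -(prednK M0) ltnS; apply: deg_le => S hS.
    rewrite (@anf_coef_wt n g H); last by move=> x; rewrite ffunE.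
    rewrite (prednK M0) in hS.
    rewrite -(subnK hS) iterD.
    have -> : iter M D H = fun _ => false.
      apply: functional_extensionality => j.
      by rewrite iterD_pow /H modnDr addbb.
    exact: iter_false.
  have gnz : g != bconst n false.
    by apply/eqP => /ffunP /(_ (xw n u)); rewrite !ffunE wt_xw // /H modn_small // eqxx.
  have gann : annihilates g f || annihilates g (bcompl f).
    case Fuv: (F u); apply/orP; [right|left]; apply/forallP => x;
      rewrite !ffunE hF /H; case: eqP => //= /(Fu _ (wt_le x)) ->; by rewrite Fuv.
  have := AI_le gnz gann => hAI.
  split; first by move=> _; exact: leq_ltn_trans hAI gdeg.
  exact: ltnW (leq_ltn_trans hAI gdeg).
rewrite negb_exists => /forallP Hall.
have Hu : forall u, u < M -> u + M <= n /\ F (u + M) = ~~ F u.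
  move=> u uM; move: (Hall (Ordinal uM)); rewrite /= negb_or -leqNgt => /andP [h1 h2].
  by split => //; move: h2; case: (F u); case: (F (u + M)).
have alt : forall w, w + M <= n -> F (w + M) = ~~ F w.
  move=> w.
  have uM : w %% M < M by rewrite ltn_mod.
  set u := w %% M in uM *.
  have claim : forall q, (q * M + u <= n -> F (q * M + u) = F u (+) odd q) /\
                         (q.+1 * M + u <= n -> F (q.+1 * M + u) = F u (+) odd q.+1).
    elim=> [|q [IH1 IH2]].
      split; first by rewrite mul0n add0n addbF.
      rewrite mul1n addnC => h; rewrite (Hu _ uM).2 /=.
      by rewrite addbT.
    split; first exact: IH2.
    move=> h.
    have E : q.+2 * M + u = (q * M + u) + (M + M).
      by rewrite !mulSn; set a := q * M; rewrite -!plusE; lia.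
    rewrite E per -?E // IH1 //=; first by rewrite negbK.
    by apply: leq_trans h; rewrite E leq_addr.
  move=> h.
  have wE : w = w %/ M * M + u by rewrite {1}(divn_eq w M).
  have E2 : w + M = (w %/ M).+1 * M + u.
    by rewrite {1}wE mulSn; set a := w %/ M * M; rewrite -!plusE; lia.
  rewrite E2 (claim _).2 -?E2 // {2}wE (claim _).1 -?wE; last first.
    by apply: leq_trans h; rewrite leq_addr.
  by rewrite /= addbN.
have dM : d <= M.
  apply: deg_le => S hS; rewrite hc.
  have Sn : #|S| <= n by apply: leq_trans (max_card _) _; rewrite card_ord.
  rewrite /c -(subnK (ltnW hS)) iterD.
  apply: (@iter_const0 _ true (n - M)).
  - move=> i hi; rewrite iterD_pow alt ?addbN ?addbb //.
    by rewrite -(leq_add2r M) subnK // in hi; apply: leq_trans (ltnW hS) Sn.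
  - by rewrite subn_gt0.
  - by rewrite addn0 leq_sub2r.
have dEM : d = M by apply/eqP; rewrite eqn_leq dM Md.
split.
  by move=> np; exfalso; apply: np; exists k.
have gnz : bcompl f != bconst n false.
  apply/eqP => /ffunP h; apply: Hf1; apply/ffunP => x; move: (h x).
  by rewrite !ffunE; case: (f x).
have gann : annihilates (bcompl f) f || annihilates (bcompl f) (bcompl f).
  by apply/orP; left; apply/forallP => x; rewrite ffunE; case: (f x).
apply: leq_trans (AI_le gnz gann) _.
rewrite -dEM; apply: deg_le => S hS.
rewrite (@anf_coef_wt n (bcompl f) (fun w => ~~ F w)); last by move=> x; rewrite ffunE hF.
have S0 : 0 < #|S| by apply: leq_ltn_trans (leq0n d) hS.
rewrite -(prednK S0) iterD_neg prednK // -/(c #|S|) -hc.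
apply/negP => h; have := deg_ge h; by rewrite leqNgt hS.
Qed.
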